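(* Let $T_1,T_2$ be tables joined on column $J$, where $T_1$ has a real-valued column $W$. Let $0<p_1,q_1,p_2,q_2\le1$, $S_1=\mathrm{UBS}_{p_1,q_1}(T_1,J)$, $S_2=\mathrm{UBS}_{p_2,q_2}(T_2,J)$, $p=\min\{p_1,p_2\}$, and $\hat J_{\mathrm{sum}}=\frac{1}{pq_1q_2}\sum_{(t_1,t_2)\in S_1\bowtie_J S_2}t_1.W$. Then $$\mathrm{Var}[\hat J_{\mathrm{sum}}]=\frac{1-q_2}{pq_2}\beta_1+\frac{1-q_1}{pq_1}\beta_2+\frac{(1-q_1)(1-q_2)}{pq_1q_2}\beta_3+\frac{1-p}{p}\beta_4,$$ where $\beta_1=\sum_v a_v^2\mu_v^2b_v$, $\beta_2=\sum_v a_v(\mu_v^2+\sigma_v^2)b_v^2$, $\beta_3=\sum_v a_v(\mu_v^2+\sigma_v^2)b_v$, $\beta_4=\sum_v a_v^2\mu_v^2b_v^2$.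
   Context: $T_1,T_2$ are finite multisets of tuples with a join attribute $J$ taking values in a finite set $\mathcal U$; $a_v$ (resp. $b_v$) is the number of tuples of $T_1$ (resp. $T_2$) with $J$-value $v$. For each $v$ with $a_v>0$, $\mu_v$ and $\sigma_v^2$ are the mean and (population) variance of the $W$-values of the $a_v$ tuples of $T_1$ with $J$-value $v$ (so $a_v(\mu_v^2+\sigma_v^2)$ is the sum of their squared $W$-values); terms with $a_v=0$ contribute $0$. $X\bowtie_J Y$ is the set of pairs $(t_1,t_2)\in X\times Y$ with $t_1.J=t_2.J$. $\mathrm{UBS}_{p,q}(T,J)$: given a hash function $h:\mathcal U\to[0,1]$, each tuple $t\in T$ with $h(t.J)<p$ is included independently with probability $q$; others are excluded. The values $h(v)$ are independent uniform on $[0,1]$, the same $h$ is used for both tables, and the Bernoulli coins are independent across all tuples and independent of $h$. *)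

(* Defs.v *)
From HB Require Import structures.
From mathcomp Require Import all_boot all_order all_algebra.
From mathcomp Require Import all_classical all_reals all_analysis.
Set Implicit Arguments. Unset Strict Implicit. Unset Printing Implicit Defensive.
Import Order.TTheory GRing.Theory Num.Theory.
Local Open Scope classical_set_scope.
Local Open Scope ring_scope.

(* Taking B k = setT for
   the indices outside a subfamily gives the product rule for every finite
   subfamily, i.e. the usual definition. *)
Definition mutually_independent {d} {T : measurableType d} {R : realType}
  (P : probability T R) (K : finType) (X : K -> T -> R) : Prop :=
  forall B : K -> set R, (forall k, measurable (B k)) ->
    P (\bigcap_(k in [set: K]) (X k @^-1` B k)) =
    (\prod_(k : K) P (X k @^-1` B k))%E.

Definition is_uniform01 {d} {T : measurableType d} {R : realType}
  (P : probability T R) (X : T -> R) : Prop :=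
  measurable_fun setT X /\
  forall B : set R, measurable B ->
    P (X @^-1` B) = @uniform_prob R 0 1 ltr01 B.

(* X is a Bernoulli(q) coin with values in {0,1}: 1 = "included" *)
Definition is_coin {d} {T : measurableType d} {R : realType}
  (P : probability T R) (q : R) (X : T -> R) : Prop :=
  measurable_fun setT X /\ (forall w, X w = 0 \/ X w = 1) /\
  P (X @^-1` [set 1]) = q%:E.

(* Table statistics: a table T1 is a finite type I1 of tuples (a multiset of
   tuples: distinct elements of I1 may carry identical values) with join
   attribute J1 : I1 -> U and W-column W : I1 -> R. *)
Definition cnt {I U : finType} (J : I -> U) (v : U) : nat := #|[set t | J t == v]|.

Definition mean_W {R : realType} {I U : finType} (J : I -> U) (W : I -> R) (v : U) : R :=
  (\sum_(t | J t == v) W t) / (cnt J v)%:R.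

Definition var_W {R : realType} {I U : finType} (J : I -> U) (W : I -> R) (v : U) : R :=
  (\sum_(t | J t == v) (W t - mean_W J W v) ^+ 2) / (cnt J v)%:R.

Definition indic {R : realType} (b : bool) : R := if b then 1 else 0.

(* Join-sum estimator.  Tuple t1 of T1 is in S1 iff h(t1.J) < p1 and its coin
   c1 t1 is 1; similarly for T2.  Jhat = 1/(p q1 q2) * sum over joined pairs
   (t1,t2) in S1 x S2 with t1.J = t2.J of t1.W. *)
Definition Jhat_sum {d} {T : measurableType d} {R : realType}
  {U I1 I2 : finType} (J1 : I1 -> U) (J2 : I2 -> U) (W : I1 -> R)
  (h : U -> T -> R) (c1 : I1 -> T -> R) (c2 : I2 -> T -> R)
  (p1 q1 p2 q2 : R) (w : T) : R :=
  (Num.min p1 p2 * q1 * q2)^-1 *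
  \sum_(t1 : I1) \sum_(t2 : I2 | J1 t1 == J2 t2)
     (indic (h (J1 t1) w < p1) * c1 t1 w) *
     (indic (h (J2 t2) w < p2) * c2 t2 w) * W t1.

(* Main.v *)
Require Import Defs.
From HB Require Import structures.
From mathcomp Require Import all_boot all_order all_algebra.
From mathcomp Require Import all_classical all_reals all_analysis.
From mathcomp Require Import ring lra.
Import Order.TTheory GRing.Theory Num.Theory.
Local Open Scope classical_set_scope.
Local Open Scope ring_scope.
Set Implicit Arguments. Unset Strict Implicit.

Section Aux.
Context d (T : measurableType d) (R : realType) (P : probability T R).

Definition good (f : T -> R) := measurable_fun setT f /\ exists M : R, forall w, `|f w| <= M.

Lemma good_Lfun f : good f -> f \in Lfun P 1.
Proof.
move=> [mf [M HM]]; apply/Lfun1_integrable; apply: measurable_bounded_integrable => //.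
  apply: le_lt_trans (probability_le1 P measurableT) _; exact: ltry.
exists M; split; first by rewrite num_real.
move=> N MN x _ /=; apply: le_trans (HM x) _; exact: ltW.
Qed.

Lemma good_cst c : good (fun _ => c).
Proof. by split; [exact: measurable_cst | exists `|c|]. Qed.

Lemma good_add f g : good f -> good g -> good (fun w => f w + g w).
Proof.
move=> [mf [M HM]] [mg [N HN]]; split; first exact: measurable_realfun.measurable_funD.
by exists (M + N) => w; apply: le_trans (ler_normD _ _) _; apply: lerD.
Qed.

Lemma good_mul f g : good f -> good g -> good (fun w => f w * g w).
Proof.
move=> [mf [M HM]] [mg [N HN]]; split; first exact: measurable_realfun.measurable_funM.
exists (M * N) => w; rewrite normrM; apply: ler_pM => //.
Qed.

Lemma good_sum (I : Type) (r : seq I) (Q : pred I) (F : I -> T -> R) :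
  (forall i, good (F i)) -> good (fun w => \sum_(i <- r | Q i) F i w).
Proof.
move=> HF; elim: r => [|i r IH].
  by under eq_fun do rewrite big_nil; exact: good_cst.
under eq_fun do rewrite big_cons.
case: (Q i) => //; exact: good_add.
Qed.

Lemma good_prod (I : Type) (r : seq I) (Q : pred I) (F : I -> T -> R) :
  (forall i, good (F i)) -> good (fun w => \prod_(i <- r | Q i) F i w).
Proof.
move=> HF; elim: r => [|i r IH].
  by under eq_fun do rewrite big_nil; exact: good_cst.
under eq_fun do rewrite big_cons.
case: (Q i) => //; exact: good_mul.
Qed.

Definition E' (f : T -> R) : R := fine (expectation P f).

Lemma goodE f : good f -> expectation P f = (E' f)%:E.
Proof. by move=> gf; rewrite /E' fineK // expectation_fin_num // good_Lfun. Qed.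

Lemma E'_add f g : good f -> good g -> E' (fun w => f w + g w) = E' f + E' g.
Proof.
move=> gf gg; rewrite /E'.
have -> : (fun w => f w + g w) = (f \+ g)%R by [].
by rewrite expectationD ?good_Lfun // goodE // goodE.
Qed.

Lemma E'_scale k f : good f -> E' (fun w => k * f w) = k * E' f.
Proof.
move=> gf; rewrite /E'.
have -> : (fun w => k * f w) = (k \o* f)%R by apply: funext => w /=; rewrite mulrC.
by rewrite expectationZl ?good_Lfun // goodE.
Qed.

Lemma E'_cst c : E' (fun _ => c) = c.
Proof. by rewrite /E' (_ : (fun _ => c) = cst c) // expectation_cst. Qed.

Lemma E'_sum (I : Type) (r : seq I) (Q : pred I) (F : I -> T -> R) :
  (forall i, good (F i)) ->
  E' (fun w => \sum_(i <- r | Q i) F i w) = \sum_(i <- r | Q i) E' (F i).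
Proof.
move=> HF; elim: r => [|i r IH].
  by under eq_fun do rewrite big_nil; rewrite big_nil E'_cst.
under eq_fun do rewrite big_cons; rewrite big_cons.
case: (Q i) => //; rewrite E'_add ?IH //; exact: good_sum.
Qed.

End Aux.

Lemma uniform_lt (R : realType) (x : R) : 0 < x <= 1 ->
  @uniform_prob R 0 1 ltr01 `]-oo, x[ = x%:E.
Proof.
move=> /andP[x0 x1].
rewrite /uniform_prob integral_uniform_pdf.
have -> : `]-oo, x[ `&` `[0, 1] = `[0, x[%classic.
  apply/seteqP; split => y /=; rewrite !in_itv /=.
    by move=> [yx /andP[y0 _]]; rewrite y0 yx.
  move=> /andP[y0 yx]; rewrite yx y0 /=; split => //.
  exact: ltW (lt_le_trans yx x1).
rewrite (eq_integral (fun y => cst (1%:E) y)); last first.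
  move=> y; rewrite inE /= in_itv /= => /andP[y0 yx].
  by rewrite /uniform_pdf y0 /= (ltW (lt_le_trans yx x1)) subr0 invr1.
rewrite integral_cst //= lebesgue_measure_itv /= lte_fin x0 mul1e.
by rewrite sube0.
Qed.

Lemma prod_indic d (T : measurableType d) (R : realType) (K : finType) (A : K -> set T) w :
  \prod_(k : K) (\1_(A k) w : R) = \1_(\bigcap_(k in [set: K]) A k) w.
Proof.
rewrite indicE; case: (boolP (w \in _)) => H.
  rewrite big1 // => k _; rewrite indicE.
  by move: H; rewrite inE => /(_ k I) Ak; rewrite mem_set.
have [k Nk] : exists k, ~ A k w.
  apply/existsNP => Hall; move/negP: H; apply; rewrite inE => k _; exact: Hall.
by rewrite (bigD1 k) //= indicE memNset // mul0r.
Qed.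

Section Alg.
Context (R : realType) (U : finType).

Lemma sum_part (I : finType) (J : I -> U) (f : I -> U -> R) :
  \sum_v \sum_(t | J t == v) f t v = \sum_t f t (J t).
Proof.
under eq_bigr do rewrite big_mkcond /=.
rewrite exchange_big /=; apply: eq_bigr => t _.
rewrite -big_mkcond /= (big_pred1 (J t)) // => v /=; by rewrite eq_sym.
Qed.

Lemma cntE (I : finType) (J : I -> U) v : (cnt J v)%:R = \sum_(t | J t == v) (1 : R).
Proof.
rewrite (eq_bigl (fun t => t \in [set t | J t == v]%classic)); last first.
  by move=> t /=; apply/idP/idP; [move=> H; exact: mem_set | rewrite in_setE].
by rewrite sumr_const /cnt.
Qed.

Lemma mean_var (I : finType) (J : I -> U) (W : I -> R) v :
  (cnt J v)%:R * mean_W J W v = \sum_(t | J t == v) W t /\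
  (cnt J v)%:R * (mean_W J W v ^+ 2 + var_W J W v) = \sum_(t | J t == v) W t ^+ 2.
Proof.
rewrite /var_W /mean_W; case: (pickP (fun t => J t == v)) => [t0 Ht0 | Hn].
  have a0 : (cnt J v)%:R != 0 :> R.
    rewrite cntE (bigD1 t0) //= lt0r_neq0 // ltr_pwDl // sumr_ge0 //.
  set a := (cnt J v)%:R in a0 *; set A := \sum_(t | J t == v) W t.
  split; first by rewrite mulrC divfK.
  have -> : \sum_(t | J t == v) (W t - A / a) ^+ 2 =
     \sum_(t | J t == v) W t ^+ 2 - (A / a) *+ 2 * A + (A / a) ^+ 2 * a.
    rewrite /a cntE mulr_sumr -/A mulr_sumr -sumrB -big_split /=.
    by apply: eq_bigr => t _; rewrite sqrrB; ring.
  field; exact: a0.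
have -> : (cnt J v)%:R = 0 :> R by rewrite cntE big_pred0.
by rewrite !mul0r !big_pred0.
Qed.

Lemma prod_if1 (T : finType) (a : T) (f : T -> R) :
  \prod_x (if x == a then f x else 1) = f a.
Proof. by rewrite -big_mkcond big_pred1_eq. Qed.

Lemma prod_if2 (T : finType) (a b : T) (f : T -> R) :
  \prod_x (if (x == a) || (x == b) then f x else 1) = if a == b then f a else f a * f b.
Proof.
rewrite -big_mkcond; case: eqP => [->|ab].
  by under eq_bigl do rewrite orbb; rewrite big_pred1_eq.
rewrite (bigD1 a) ?eqxx //= (big_pred1 b) // => x /=.
case: (eqVneq x a) => [->|xa] /=; last by rewrite andbT.
by apply/esym/eqP.
Qed.

End Alg.

Section Alg2.
Context (R : realType).

Lemma L_gen (I : finType) (P : pred I) (f : I -> R) (q : R) :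
  \sum_(t | P t) \sum_(s | P s) f t * f s * (if t == s then q else q * q) =
  q * q * (\sum_(t | P t) f t) ^+ 2 + (q - q * q) * \sum_(t | P t) f t ^+ 2.
Proof.
transitivity (\sum_(t | P t) (q * q * (f t * \sum_(s | P s) f s) + (q - q * q) * f t ^+ 2)).
  apply: eq_bigr => t Pt; rewrite (bigD1 t) //= eqxx [in RHS](bigD1 t Pt) /=.
  have -> : \sum_(s | P s && (s != t)) f t * f s * (if t == s then q else q * q) =
            f t * (q * q) * \sum_(s | P s && (s != t)) f s.
    rewrite mulr_sumr; apply: eq_bigr => s /andP[_ st].
    by rewrite eq_sym (negbTE st); ring.
  ring.
by rewrite big_split /= -!mulr_sumr -mulr_suml expr2.
Qed.

Lemma L_cst (I : finType) (P : pred I) (y : R) :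
  \sum_(t | P t) \sum_(s | P s) y = y * (\sum_(t | P t) 1) ^+ 2.
Proof.
rewrite expr2 mulr_suml mulr_sumr; apply: eq_bigr => t _.
by rewrite mul1r mulr_sumr; apply: eq_bigr => s _; rewrite mulr1.
Qed.

Lemma L_one (I : finType) (P : pred I) (q : R) :
  \sum_(t | P t) \sum_(s | P s) (if t == s then q else q * q) =
  q * q * (\sum_(t | P t) 1) ^+ 2 + (q - q * q) * \sum_(t | P t) 1.
Proof.
have := L_gen P (fun _ => 1) q.
under eq_bigr do under eq_bigr do rewrite mulr1 mul1r.
by rewrite [X in _ = _ + _ * X -> _](eq_bigr (fun _ => 1)) // => t _; rewrite expr1n.
Qed.

End Alg2.

Section Alg3.
Context (R : realType) (U I1 I2 : finType) (J1 : I1 -> U) (J2 : I2 -> U) (W : I1 -> R)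
  (pp q1 q2 : R).

Lemma sq_sum (I : finType) (P : pred I) (f : I -> R) :
  (\sum_(t | P t) f t) ^+ 2 = \sum_(t | P t) \sum_(s | P s) f t * f s.
Proof. by rewrite expr2 mulr_suml; apply: eq_bigr => t _; rewrite mulr_sumr. Qed.

Lemma perv v :
  \sum_(t1 | J1 t1 == v) \sum_(t2 | J2 t2 == v) \sum_(s1 | J1 s1 == v) \sum_(s2 | J2 s2 == v)
    W t1 * W s1 * (pp * (if t1 == s1 then q1 else q1 * q1) * (if t2 == s2 then q2 else q2 * q2)
                   - (pp * q1 * q2) ^+ 2)
  = pp * (q1 * q1 * (\sum_(t | J1 t == v) W t) ^+ 2 + (q1 - q1 * q1) * \sum_(t | J1 t == v) W t ^+ 2)
       * (q2 * q2 * (\sum_(t | J2 t == v) 1) ^+ 2 + (q2 - q2 * q2) * \sum_(t | J2 t == v) 1)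
    - (pp * q1 * q2) ^+ 2 * (\sum_(t | J1 t == v) W t) ^+ 2 * (\sum_(t | J2 t == v) 1) ^+ 2.
Proof.
set b := \sum_(t | J2 t == v) (1 : R).
set B2 := q2 * q2 * b ^+ 2 + (q2 - q2 * q2) * b.
set c := (pp * q1 * q2) ^+ 2.
transitivity (\sum_(t1 | J1 t1 == v) \sum_(s1 | J1 s1 == v)
   (W t1 * W s1 * (if t1 == s1 then q1 else q1 * q1) * (pp * B2) - W t1 * W s1 * (c * b ^+ 2))).
  apply: eq_bigr => t1 _; rewrite exchange_big /=; apply: eq_bigr => s1 _.
  have -> : W t1 * W s1 * (if t1 == s1 then q1 else q1 * q1) * (pp * B2) - W t1 * W s1 * (c * b ^+ 2)
    = (W t1 * W s1 * (if t1 == s1 then q1 else q1 * q1) * pp) *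
        (\sum_(t2 | J2 t2 == v) \sum_(s2 | J2 s2 == v) (if t2 == s2 then q2 else q2 * q2))
      - \sum_(t2 | J2 t2 == v) \sum_(s2 | J2 s2 == v) (W t1 * W s1 * c).
    by rewrite L_one L_cst -/b /B2; ring.
  rewrite mulr_sumr -sumrB; apply: eq_bigr => t2 _.
  by rewrite mulr_sumr -sumrB; apply: eq_bigr => s2 _; ring.
have -> : \sum_(t1 | J1 t1 == v) \sum_(s1 | J1 s1 == v)
   (W t1 * W s1 * (if t1 == s1 then q1 else q1 * q1) * (pp * B2) - W t1 * W s1 * (c * b ^+ 2))
   = (\sum_(t1 | J1 t1 == v) \sum_(s1 | J1 s1 == v) W t1 * W s1 * (if t1 == s1 then q1 else q1 * q1))
       * (pp * B2)
     - (\sum_(t1 | J1 t1 == v) \sum_(s1 | J1 s1 == v) W t1 * W s1) * (c * b ^+ 2).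
  rewrite !mulr_suml -sumrB; apply: eq_bigr => t1 _.
  by rewrite !mulr_suml -sumrB.
by rewrite L_gen -sq_sum /B2; ring.
Qed.

End Alg3.

Section Alg4.
Context (R : realType) (U I1 I2 : finType) (J1 : I1 -> U) (J2 : I2 -> U) (W : I1 -> R)
  (pp q1 q2 : R).

Definition ee (t1 : I1) (t2 : I2) (s1 : I1) (s2 : I2) : R := (if J1 t1 == J1 s1 then pp else pp * pp) *
  (if t1 == s1 then q1 else q1 * q1) * (if t2 == s2 then q2 else q2 * q2).

Lemma big_id :
  \sum_t1 \sum_(t2 | J1 t1 == J2 t2) \sum_s1 \sum_(s2 | J1 s1 == J2 s2) W t1 * W s1 * ee t1 t2 s1 s2
  - (pp * q1 * q2) ^+ 2 * (\sum_t1 \sum_(t2 | J1 t1 == J2 t2) W t1) ^+ 2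
  = \sum_v (pp * (q1 * q1 * (\sum_(t | J1 t == v) W t) ^+ 2 + (q1 - q1 * q1) * \sum_(t | J1 t == v) W t ^+ 2)
       * (q2 * q2 * (\sum_(t | J2 t == v) 1) ^+ 2 + (q2 - q2 * q2) * \sum_(t | J2 t == v) 1)
    - (pp * q1 * q2) ^+ 2 * (\sum_(t | J1 t == v) W t) ^+ 2 * (\sum_(t | J2 t == v) 1) ^+ 2).
Proof.
set c := (pp * q1 * q2) ^+ 2.
have H1 : c * (\sum_t1 \sum_(t2 | J1 t1 == J2 t2) W t1) ^+ 2 =
  \sum_t1 \sum_(t2 | J1 t1 == J2 t2) \sum_s1 \sum_(s2 | J1 s1 == J2 s2) W t1 * W s1 * c.
  rewrite expr2 mulr_suml mulr_sumr; apply: eq_bigr => t1 _.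
  rewrite mulr_suml mulr_sumr; apply: eq_bigr => t2 _.
  rewrite mulr_sumr mulr_sumr; apply: eq_bigr => s1 _.
  by rewrite mulr_sumr mulr_sumr; apply: eq_bigr => s2 _; ring.
rewrite H1 (eq_bigr _ (fun v _ => esym (perv J1 J2 W pp q1 q2 v))).
rewrite (sum_part J1 (fun t1 v => \sum_(t2 | J2 t2 == v) \sum_(s1 | J1 s1 == v)
   \sum_(s2 | J2 s2 == v) W t1 * W s1 * (pp * (if t1 == s1 then q1 else q1 * q1) *
   (if t2 == s2 then q2 else q2 * q2) - c))).
rewrite -sumrB; apply: eq_bigr => t1 _.
rewrite -sumrB (eq_bigl (fun t2 => J2 t2 == J1 t1)); last by move=> t2; rewrite eq_sym.
apply: eq_bigr => t2 /eqP Ht2.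
rewrite -sumrB [RHS]big_mkcond /=; apply: eq_bigr => s1 _.
case: eqP => Hs1.
  rewrite -sumrB [LHS](eq_bigl (fun s2 => J2 s2 == J1 t1)); last by move=> s2; rewrite Hs1 eq_sym.
  by apply: eq_bigr => s2 _; rewrite /ee Hs1 eqxx; ring.
rewrite -sumrB big1 // => s2 /eqP Hs2; rewrite /ee.
have n1 : (J1 t1 == J1 s1) = false by apply/eqP => e; apply: Hs1; rewrite e.
have n2 : (t1 == s1) = false by apply/eqP => e; apply: Hs1; rewrite e.
have n3 : (t2 == s2) = false by apply/eqP => e; apply: Hs1; rewrite Hs2 -e Ht2.
by rewrite n1 n2 n3 /c; ring.
Qed.

End Alg4.

Section Main.
Context d (Om : measurableType d) (R : realType) (P : probability Om R) (U I1 I2 : finType)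
  (h : U -> Om -> R) (c1 : I1 -> Om -> R) (c2 : I2 -> Om -> R) (pp q1 q2 : R).
Hypotheses (Hpp : 0 < pp <= 1) (Hh : forall v, is_uniform01 P (h v))
  (Hc1 : forall t, is_coin P q1 (c1 t)) (Hc2 : forall t, is_coin P q2 (c2 t))
  (Hind : mutually_independent P
    (fun k : U + (I1 + I2) =>
       match k with inl v => h v | inr (inl t) => c1 t | inr (inr t) => c2 t end)).

Definition Z v w := Defs.indic (h v w < pp) : R.

Lemma L1 (PU : pred U) (P1 : pred I1) (P2 : pred I2) :
  E' P (fun w => (\prod_x (if PU x then Z x w else 1)) * (\prod_t (if P1 t then c1 t w else 1))
     * (\prod_t (if P2 t then c2 t w else 1))) =
  (\prod_(x : U) (if PU x then pp else 1)) * (\prod_(t : I1) (if P1 t then q1 else 1))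
     * (\prod_(t : I2) (if P2 t then q2 else 1)).
Proof.
set X := (fun k : U + (I1 + I2) =>
       match k with inl v => h v | inr (inl t) => c1 t | inr (inr t) => c2 t end).
pose B : U + (I1 + I2) -> set R := fun k => match k with
  | inl x => if PU x then `]-oo, pp[%classic else setT
  | inr (inl t) => if P1 t then [set 1] else setT
  | inr (inr t) => if P2 t then [set 1] else setT end.
have mB : forall k, measurable (B k).
  case=> [x|[t|t]] /=; case: ifP => _ //; exact: measurable_set1.
have mX : forall k, measurable_fun setT (X k).
  case=> [x|[t|t]] /=; [exact: (Hh x).1 | exact: (Hc1 t).1 | exact: (Hc2 t).1].
have eqF : (fun w => (\prod_x (if PU x then Z x w else 1)) * (\prod_t (if P1 t then c1 t w else 1))
     * (\prod_t (if P2 t then c2 t w else 1))) = \1_(\bigcap_(k in [set: U + (I1 + I2)]) (X k @^-1` B k)).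
  apply: funext => w; rewrite -prod_indic big_sumType big_sumType /= mulrA.
  congr (_ * _ * _); apply: eq_bigr => x _; rewrite /B; case: ifP => _; rewrite indicE.
  - rewrite /Z /Defs.indic; case: (boolP (h x w < pp)) => H.
      by rewrite mem_set //= in_itv /= H.
    by rewrite memNset //= in_itv /= (negbTE H).
  - by rewrite mem_set.
  - have [H|H] := (Hc1 x).2.1 w; rewrite H.
      by rewrite memNset //= H => /eqP; rewrite eq_sym oner_eq0.
    by rewrite mem_set //= H.
  - by rewrite mem_set.
  - have [H|H] := (Hc2 x).2.1 w; rewrite H.
      by rewrite memNset //= H => /eqP; rewrite eq_sym oner_eq0.
    by rewrite mem_set //= H.
  - by rewrite mem_set.
rewrite /E' eqF expectation_indic; last first.
  by apply: fin_bigcap_measurable; [exact: finite_finset | move=> k _; rewrite -[X in measurable X]setTI; exact: mX].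
rewrite Hind //.
rewrite (eq_bigr (fun k => (match k with
  | inl x => if PU x then pp else 1
  | inr (inl t) => if P1 t then q1 else 1
  | inr (inr t) => if P2 t then q2 else 1 end)%:E)); last first.
  case=> [x|[t|t]] _ /=; rewrite /B; case: ifP => _; rewrite ?preimage_setT ?probability_setT //.
  - by rewrite (Hh x).2 // uniform_lt.
  - exact: (Hc1 t).2.2.
  - exact: (Hc2 t).2.2.
by rewrite prodEFin /= big_sumType big_sumType /= mulrA.
Qed.

Lemma goodZ v : good (Z v).
Proof.
split.
  have -> : Z v = (fun w => \1_(`]-oo, pp[%classic) (h v w) : R).
    apply: funext => w; rewrite indicE /Z /Defs.indic; case: (boolP (h v w < pp)) => H.
      by rewrite mem_set //= in_itv /= H.
    by rewrite memNset //= in_itv /= (negbTE H).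
  by apply: measurableT_comp; [exact: measurable_realfun.measurable_indic | exact: (Hh v).1].
by exists 1 => w; rewrite /Z /Defs.indic; case: ifP; rewrite ?normr1 ?normr0.
Qed.

Lemma goodc1 t : good (c1 t).
Proof.
split; first exact: (Hc1 t).1.
by exists 1 => w; have [->|->] := (Hc1 t).2.1 w; rewrite ?normr1 ?normr0.
Qed.

Lemma goodc2 t : good (c2 t).
Proof.
split; first exact: (Hc2 t).1.
by exists 1 => w; have [->|->] := (Hc2 t).2.1 w; rewrite ?normr1 ?normr0.
Qed.

Lemma Zidem v w : Z v w * Z v w = Z v w.
Proof. by rewrite /Z /Defs.indic; case: ifP; rewrite ?mulr1 ?mulr0. Qed.

Lemma c1idem t w : c1 t w * c1 t w = c1 t w.
Proof. by have [->|->] := (Hc1 t).2.1 w; rewrite ?mulr1 ?mulr0. Qed.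

Lemma c2idem t w : c2 t w * c2 t w = c2 t w.
Proof. by have [->|->] := (Hc2 t).2.1 w; rewrite ?mulr1 ?mulr0. Qed.

Lemma idem2 (T : finType) (f : T -> R) a b : f a * f a = f a ->
  f a * f b = if a == b then f a else f a * f b.
Proof. by move=> H; case: eqP => [<-|]. Qed.

Context (J1 : I1 -> U) (J2 : I2 -> U).

Definition F t1 t2 w := Z (J1 t1) w * c1 t1 w * c2 t2 w.

Lemma goodF t1 t2 : good (F t1 t2).
Proof. by apply: good_mul; [apply: good_mul|]; [exact: goodZ|exact: goodc1|exact: goodc2]. Qed.

Lemma E'F1 t1 t2 : E' P (F t1 t2) = pp * q1 * q2.
Proof.
have := L1 (fun x => x == J1 t1) (fun t => t == t1) (fun t => t == t2).
rewrite /= !prod_if1 => <-; congr E'.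
by apply: funext => w; rewrite /F !prod_if1.
Qed.

Lemma E'F2 t1 t2 s1 s2 : E' P (fun w => F t1 t2 w * F s1 s2 w) = ee J1 pp q1 q2 t1 t2 s1 s2.
Proof.
have := L1 (fun x => (x == J1 t1) || (x == J1 s1)) (fun t => (t == t1) || (t == s1))
  (fun t => (t == t2) || (t == s2)).
rewrite /= !prod_if2 => Hl; rewrite /ee -Hl; congr E'.
apply: funext => w; rewrite /F !prod_if2.
have -> : Z (J1 t1) w * c1 t1 w * c2 t2 w * (Z (J1 s1) w * c1 s1 w * c2 s2 w) =
  (Z (J1 t1) w * Z (J1 s1) w) * (c1 t1 w * c1 s1 w) * (c2 t2 w * c2 s2 w) by ring.
case: (eqVneq (J1 t1) (J1 s1)) => [->|n1]; rewrite ?eqxx ?(negbTE n1) ?Zidem;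
case: (eqVneq t1 s1) => [->|n2]; rewrite ?eqxx ?(negbTE n2) ?c1idem;
by case: (eqVneq t2 s2) => [->|n3]; rewrite ?eqxx ?(negbTE n3) ?c2idem.
Qed.

End Main.


Unset Implicit Arguments. Set Strict Implicit.

Theorem lemma5 (d : measure_display) (Omega : measurableType d) (R : realType)
  (P : probability Omega R) (U I1 I2 : finType)
  (J1 : I1 -> U) (J2 : I2 -> U) (W : I1 -> R)
  (p1 q1 p2 q2 : R)
  (h : U -> Omega -> R) (c1 : I1 -> Omega -> R) (c2 : I2 -> Omega -> R) :
  0 < p1 <= 1 -> 0 < q1 <= 1 -> 0 < p2 <= 1 -> 0 < q2 <= 1 ->
  (forall v, is_uniform01 P (h v)) ->
  (forall t, is_coin P q1 (c1 t)) ->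
  (forall t, is_coin P q2 (c2 t)) ->
  mutually_independent P
    (fun k : U + (I1 + I2) =>
       match k with inl v => h v | inr (inl t) => c1 t | inr (inr t) => c2 t end) ->
  let p := Num.min p1 p2 in
  let a := fun v => (cnt J1 v)%:R : R in
  let b := fun v => (cnt J2 v)%:R : R in
  let mu := mean_W J1 W in
  let s2 := var_W J1 W in
  let beta1 := \sum_(v : U) a v ^+ 2 * mu v ^+ 2 * b v in
  let beta2 := \sum_(v : U) a v * (mu v ^+ 2 + s2 v) * b v ^+ 2 in
  let beta3 := \sum_(v : U) a v * (mu v ^+ 2 + s2 v) * b v in
  let beta4 := \sum_(v : U) a v ^+ 2 * mu v ^+ 2 * b v ^+ 2 in
  'V_P[Jhat_sum J1 J2 W h c1 c2 p1 q1 p2 q2] =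
    ((1 - q2) / (p * q2) * beta1 + (1 - q1) / (p * q1) * beta2
     + (1 - q1) * (1 - q2) / (p * q1 * q2) * beta3 + (1 - p) / p * beta4)%:E.
Proof.
move=> /andP[p10 p11] /andP[q10 q11] /andP[p20 p21] /andP[q20 q21] Hh Hc1 Hc2 Hind.
move=> p a b mu s2 beta1 beta2 beta3 beta4.
have Hpp : 0 < p <= 1.
  apply/andP; split; first by rewrite /p lt_min p10 p20.
  by rewrite /p ge_min p11.
set K := (p * q1 * q2)^-1.
pose X := fun w => K * \sum_t1 \sum_(t2 | J1 t1 == J2 t2) W t1 * F h c1 c2 p J1 t1 t2 w.
have HJ : Jhat_sum J1 J2 W h c1 c2 p1 q1 p2 q2 = X.
  apply: funext => w; rewrite /Jhat_sum /X; congr (_ * _).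
  apply: eq_bigr => t1 _; apply: eq_bigr => t2 /eqP Ht.
  rewrite /F /Z -Ht /Defs.indic /p lt_min.
  by case: (h (J1 t1) w < p1); case: (h (J1 t1) w < p2) => /=; ring.
rewrite HJ.
have gF := goodF p Hh Hc1 Hc2 J1.
have gX : good X.
  apply: good_mul; first exact: good_cst.
  apply: good_sum => t1; apply: good_sum => t2; apply: good_mul; [exact: good_cst | exact: gF].
have gXX : good (fun w => X w * X w) by exact: good_mul.
have EX : E' P X = K * ((\sum_t1 \sum_(t2 | J1 t1 == J2 t2) W t1) * (p * q1 * q2)).
  rewrite /X E'_scale; last first.
    apply: good_sum => t1; apply: good_sum => t2; apply: good_mul; [exact: good_cst | exact: gF].
  congr (_ * _); rewrite E'_sum; last first.
    move=> t1; apply: good_sum => t2; apply: good_mul; [exact: good_cst | exact: gF].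
  rewrite mulr_suml; apply: eq_bigr => t1 _.
  rewrite E'_sum; last by move=> t2; apply: good_mul; [exact: good_cst | exact: gF].
  rewrite mulr_suml; apply: eq_bigr => t2 _.
  by rewrite E'_scale // (E'F1 Hpp Hh Hc1 Hc2 Hind).
have EXX : E' P (fun w => X w * X w) = K * K * \sum_t1 \sum_(t2 | J1 t1 == J2 t2)
    \sum_s1 \sum_(r2 | J1 s1 == J2 r2) W t1 * W s1 * ee J1 p q1 q2 t1 t2 s1 r2.
  have -> : (fun w => X w * X w) = (fun w => K * K * \sum_t1 \sum_(t2 | J1 t1 == J2 t2)
    \sum_s1 \sum_(r2 | J1 s1 == J2 r2) W t1 * W s1 *
       (F h c1 c2 p J1 t1 t2 w * F h c1 c2 p J1 s1 r2 w)).
    apply: funext => w; rewrite /X mulrACA; congr (_ * _).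
    rewrite mulr_suml; apply: eq_bigr => t1 _.
    rewrite mulr_suml; apply: eq_bigr => t2 _.
    rewrite mulr_sumr; apply: eq_bigr => s1 _.
    by rewrite mulr_sumr; apply: eq_bigr => r2 _; ring.
  have gG : forall t1 t2 s1 r2, good (fun w => W t1 * W s1 *
       (F h c1 c2 p J1 t1 t2 w * F h c1 c2 p J1 s1 r2 w)).
    by move=> t1 t2 s1 r2; apply: good_mul; [exact: good_cst | exact: good_mul].
  rewrite E'_scale; last first.
    apply: good_sum => t1; apply: good_sum => t2; apply: good_sum => s1; apply: good_sum => r2.
    exact: gG.
  congr (_ * _); rewrite E'_sum; last first.
    move=> t1; apply: good_sum => t2; apply: good_sum => s1; apply: good_sum => r2; exact: gG.
  apply: eq_bigr => t1 _; rewrite E'_sum; last first.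
    move=> t2; apply: good_sum => s1; apply: good_sum => r2; exact: gG.
  apply: eq_bigr => t2 _; rewrite E'_sum; last first.
    move=> s1; apply: good_sum => r2; exact: gG.
  apply: eq_bigr => s1 _; rewrite E'_sum; last by move=> r2; exact: gG.
  apply: eq_bigr => r2 _.
  rewrite E'_scale; last exact: good_mul.
  by rewrite (E'F2 Hpp Hh Hc1 Hc2 Hind).
rewrite /variance covarianceE; last first.
- by apply: good_Lfun; exact: gXX.
- exact: good_Lfun.
- exact: good_Lfun.
rewrite (goodE P gXX) (goodE P gX) EXX EX -EFinM -EFinB; congr (_%:E).
have Hb := big_id J1 J2 W p q1 q2.
set S1 := (\sum_t1 \sum_(t2 | J1 t1 == J2 t2) W t1) in Hb *.
set S2 := (\sum_t1 \sum_(t2 | J1 t1 == J2 t2) \sum_s1 \sum_(r2 | J1 s1 == J2 r2)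
   W t1 * W s1 * ee J1 p q1 q2 t1 t2 s1 r2) in Hb *.
have -> : K * K * S2 - K * (S1 * (p * q1 * q2)) * (K * (S1 * (p * q1 * q2))) =
  K * K * (S2 - (p * q1 * q2) ^+ 2 * S1 ^+ 2) by ring.
rewrite Hb mulr_sumr /beta1 /beta2 /beta3 /beta4 !mulr_sumr -!big_split /=.
apply: eq_bigr => v _.
have [m1 m2] := mean_var J1 W v.
rewrite -m1 -m2 -!cntE /a /b /mu /s2 /K.
have p0 : p != 0 by case/andP: Hpp => /lt0r_neq0.
have q10' : q1 != 0 by apply: lt0r_neq0.
have q20' : q2 != 0 by apply: lt0r_neq0.
by field; rewrite ?p0 ?q10' ?q20'.
Qed.
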